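(* Let $n\in\mathbb{N}$, $n\neq1$, and let $f\colon\mathbb{R}\to\mathbb{R}$ be an additive function. Define $\phi\colon\mathbb{R}\to\mathbb{R}$ by $\phi(x)=f(x^{n})-f(x)^{n}$. Assume that $\phi$ is locally regular on $\mathbb{R}$. Then $f$ is linear, i.e. $f(x)=f(1)x$ for all $x\in\mathbb{R}$.
   Context: $\mathbb{N}$ denotes the set of positive integers. A function $f\colon\mathbb{R}\to\mathbb{R}$ is additive if $f(x+y)=f(x)+f(y)$ for all $x,y\in\mathbb{R}$. A real function defined on a subset of $\mathbb{R}$ is called locally regular on its domain if at least one of the following holds: (i) it is bounded on a (Lebesgue) measurable subset of its domain of positive measure; (ii) it is continuous at some point of its domain; (iii) there is a subset of its domain of positive Lebesgue measure on which its restriction is Lebesgue measurable. *)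

(* Defs.v *)
From HB Require Import structures.
From mathcomp Require Import all_boot all_order all_algebra.
From mathcomp Require Import all_classical all_reals all_analysis.
Set Implicit Arguments. Unset Strict Implicit. Unset Printing Implicit Defensive.
Import Order.TTheory GRing.Theory Num.Theory.
Import numFieldNormedType.Exports.
Local Open Scope classical_set_scope.
Local Open Scope ring_scope.

(* The real line equipped with the sigma-algebra of Lebesgue measurable sets
   (the completion of the Borel sigma-algebra w.r.t. Lebesgue measure). *)
Definition LebR (R : realType) : Type :=
  caratheodory_type (lebesgue_stieltjes_measure (@idfun R))^*%mu.

Definition leb (R : realType) : set (LebR R) -> \bar R :=
  @completed_lebesgue_measure R.

Definition additive_fun (R : realType) (f : R -> R) : Prop :=
  forall x y, f (x + y) = f x + f y.

Definition locally_regular (R : realType) (phi : R -> R) : Prop :=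
  (exists D : set (LebR R), measurable D /\ (0 < leb D)%E /\
      exists M : R, forall x, D x -> `|phi x| <= M)
  \/ (exists x : R, {for x, continuous phi})
  \/ (exists D : set (LebR R), measurable D /\ (0 < leb D)%E /\
      measurable_fun D (phi : LebR R -> R)).

(* Main.v *)
From HB Require Import structures.
From mathcomp Require Import all_boot all_order all_algebra.
From mathcomp Require Import all_classical all_reals all_analysis.
From mathcomp Require Import measurable_realfun lebesgue_integral_differentiation.
From mathcomp Require Import ring lra zify.
Require Import Defs.
Set Implicit Arguments. Unset Strict Implicit. Unset Printing Implicit Defensive.
Import Order.TTheory GRing.Theory Num.Theory.
Import numFieldNormedType.Exports.
Local Open Scope classical_set_scope.
Local Open Scope ring_scope.

Section Meas.
Context {R : realType}.
Local Notation mu := (@lebesgue_measure R).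

Section E.
Local Open Scope ereal_scope.
Lemma outerE (X : set R) :
  ((lebesgue_stieltjes_measure (@idfun R))^*)%mu X = ((@wlength R idfun)^*)%mu X.
Proof.
apply/eqP; rewrite eq_le; apply/andP; split.
- apply: le_ereal_inf_tmp => _ [A [mA XA] <-].
  have -> : \sum_(k <oo) wlength idfun (A k) =
      \sum_(k <oo) lebesgue_stieltjes_measure idfun (A k).
    apply: eq_eseriesr => k _.
    by rewrite /lebesgue_stieltjes_measure /measure_extension measurable_mu_extE.
  apply: ereal_inf_lbound; exists A => //; split => // k.
  exact: sub_sigma_algebra.
- apply: le_ereal_inf_tmp => _ [A [mA XA] <-].
  apply: (@le_trans _ _ (((@wlength R idfun)^*)%mu (\bigcup_k A k))).
    exact: le_outer_measure.
  exact: (outer_measure_sigma_subadditive ((@wlength R idfun)^*)%mu A).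
Qed.

Lemma L0 (D : set (LebR R)) : measurable D -> 0 < leb D ->
  exists A : set R, [/\ measurable A, A `<=` D & 0 < lebesgue_measure A].
Proof.
move=> mD D0.
have e : ((lebesgue_stieltjes_measure (@idfun R))^*)%mu = ((@wlength R idfun)^*)%mu.
  exact/funext/outerE.
have mD' : ((@wlength R idfun)^*)%mu.-cara.-measurable (D : set R).
  by move: mD; rewrite /measurable /= e.
move: mD'; rewrite -completed_caratheodory_measurable g_sigma_completed_algebra_genE.
move=> [A mA [N nN ANeq]].
exists A; split => //; first by rewrite -ANeq => x Ax; left.
move/negligible_outer_measure : nN => N0.
move: D0; rewrite /leb /completed_lebesgue_measure /completed_lebesgue_stieltjes_measure.
rewrite /completed_measure_extension -ANeq => /lt_le_trans; apply.
apply: (le_trans (outer_measureU2 _ _ _)).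
rewrite -[leRHS]adde0; apply: leeD => //.
move: N0 => /= ->.
exact: lexx.
Qed.

Lemma L1 (phi : R -> R) : locally_regular phi ->
  exists A : set R, [/\ measurable A, 0 < lebesgue_measure A &
    exists M, forall x, A x -> (`|phi x| <= M)%R].
Proof.
have caseI : forall D : set (LebR R), measurable D -> 0 < leb D ->
    forall M, (forall x, D x -> (`|phi x| <= M)%R) ->
  exists A : set R, [/\ measurable A, 0 < lebesgue_measure A &
    exists M, forall x, A x -> (`|phi x| <= M)%R].
  move=> D mD D0 M hM; have [A [mA AD A0]] := L0 mD D0.
  by exists A; split => //; exists M => x /AD; exact: hM.
case=> [[D [mD [D0 [M hM]]]]|[[x0 cx]|[D [mD [D0 mphi]]]]].
- exact: caseI hM.
- have := cx (ball (phi x0) 1) (nbhsx_ballx _ _ ltr01).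
  move=> /nbhs_ballP [r /= r0 hr].
  exists (ball x0 r); split.
  + exact: measurable_ball.
  + by rewrite lebesgue_measure_ball ?ltW // lte_fin mulrn_wgt0.
  + exists (`|phi x0| + 1)%R => y /hr /= hy.
    have := ltW hy; rewrite /ball /= => hy'.
    rewrite (_ : phi y = phi x0 - (phi x0 - phi y))%R; last by ring.
    by apply: (le_trans (ler_normB _ _)); rewrite lerD2l.
- pose Dk (k : nat) := D `&` (phi @^-1` `[(- k%:R)%R, k%:R]%classic).
  have mDk k : measurable (Dk k) by apply: mphi => //; exact: measurable_itv.
  have [k Dk0] : exists k, 0 < leb (Dk k).
    apply: contrapT => H.
    have H0 k : leb (Dk k) = 0.
      apply/eqP; rewrite eq_le; apply/andP; split; last exact: outer_measure_ge0.
      by rewrite leNgt; apply/negP => h; apply: H; exists k.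
    have : leb D <= 0.
      have DU : (D : set R) `<=` \bigcup_k (Dk k : set R).
        move=> x Dx; exists (Num.Def.archi_bound `|phi x|) => //; split => //=.
        rewrite in_itv /= -ler_norml; apply: ltW; exact: archi_boundP.
      move: H0; rewrite /leb /completed_lebesgue_measure /completed_lebesgue_stieltjes_measure.
      rewrite /completed_measure_extension => H0.
      pose l := ((@wlength R idfun)^*)%mu.
      have h1 : l D <= l (\bigcup_k Dk k) by apply: le_outer_measure.
      have h2 : l (\bigcup_k Dk k) <= \sum_(k <oo) l (Dk k).
        exact: outer_measure_sigma_subadditive.
      apply: (le_trans h1); apply: (le_trans h2).
      by rewrite eseries0 // => i _ _; exact: H0.
    by rewrite leNgt D0.
  apply: (caseI _ (mDk k) Dk0 k%:R) => x [_ /=].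
  by rewrite in_itv /= -ler_norml.
Qed.
End E.

Lemma density_pt (A : set R) : measurable A -> (0 < mu A)%E ->
  forall e : R, 0 < e -> exists x0 r, 0 < r /\ (mu (ball x0 r `\` A) < (e * (r *+ 2))%:E)%E.
Proof.
move=> mA A0 e e0.
have [x0 [Ax0 cv]] : exists x0, A x0 /\
   ((mu (A `&` ball x0 r) * (mu (ball x0 r))^-1)%E @[r --> 0^'+] --> 1%:E).
  have [N [mN N0 sub]] := lebesgue_density mA.
  apply: contrapT => H.
  have AN : A `<=` N.
    move=> x Ax; apply: sub => /= Px; apply: H; exists x; split => //.
    by move: Px; rewrite indicE mem_set.
  have := le_measure mu (mem_set mA) (mem_set mN) AN.
  move=> h; move: (lt_le_trans A0 h); rewrite lt_neqAle => /andP[/eqP hne _].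
  by apply: hne; exact/esym.
have e1 : ((1 - e)%:E < 1%:E)%E by rewrite lte_fin ltrBlDr ltrDl.
have := cv _ (open_ereal_gt' e1).
move=> H.
have [r [r0 Hr]] : exists r, 0 < r /\ ((1 - e)%:E < mu (A `&` ball x0 r) * (mu (ball x0 r))^-1)%E.
  apply: (@filter_ex _ (0^'+)) => //.
  by near=> r; split; [near: r; exact: nbhs_right_gt| near: r; exact: H].
exists x0, r; split => //.
have mB := measurable_ball x0 r.
have muB : mu (ball x0 r) = (r *+ 2)%:E by rewrite lebesgue_measure_ball // ltW.
have fin : mu (A `&` ball x0 r) \is a fin_num.
  rewrite ge0_fin_numE ?measure_ge0 //.
  apply: (@le_lt_trans _ _ (mu (ball x0 r))); last by rewrite muB ltry.
  by apply: le_measure; rewrite ?inE //; apply: measurableI.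
have aE : mu (A `&` ball x0 r) = (fine (mu (A `&` ball x0 r)))%:E by rewrite fineK.
move: Hr; rewrite muB aE; set a := fine _.
have r2 : 0 < r *+ 2 by rewrite mulrn_wgt0.
rewrite inver gt_eqF // -EFinM lte_fin ltr_pdivlMr // => Hr.
rewrite measureD //= -/(mu (ball x0 r)) -/(mu (ball x0 r `&` A)) ?muB ?ltry // setIC aE -EFinB lte_fin.
move: Hr; rewrite mulrBl mul1r => Hr; rewrite -/a; lra.
Unshelve. all: by end_near. Qed.

Lemma lebesgue_shift (t : R) (A : set R) : measurable A ->
  pushforward mu ((fun x => x + t)%R : _ -> measurableTypeR R) A = mu A.
Proof.
move=> mA; apply/esym/lebesgue_measure_unique => //=.
  exact: measurable_funD.
move=> _ _ [[a b]] _ <-.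
rewrite /pushforward.
have -> : (fun x => x + t)%R @^-1` `]a, b]%classic = `]a - t, b - t]%classic.
  apply/seteqP; split => x /=; rewrite !in_itv /=.
  - by rewrite ltrBlDr lerBrDr.
  - by rewrite ltrBlDr lerBrDr.
rewrite /= !lebesgue_measure_itv/= !lte_fin ltrBlDr subrK.
by case: ifP => // _; rewrite -!EFinD; congr EFin; ring.
Qed.

Lemma ballE (x r y : R) : ball x r y <-> `|x - y| < r.
Proof. by rewrite /ball /=. Qed.

Lemma steinhaus (A : set R) (m : nat) : measurable A -> (0 < mu A)%E ->
  exists2 d : R, 0 < d & forall u : R, `|u| < d ->
    exists y : R, forall j : nat, (j <= m)%N -> A (y + j%:R * u).
Proof.
move=> mA A0.
set k : R := (m.+1)%:R.
have k1 : 1 <= k by rewrite /k ler1n.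
set e : R := (k * 2)^-1.
have e0 : 0 < e by rewrite invr_gt0 mulr_gt0 // (lt_le_trans ltr01 k1).
have [x0 [r [r0 Hr]]] := density_pt mA A0 e0.
set L := r *+ 2.
have L0 : 0 < L by rewrite mulrn_wgt0.
have k0 : 0 < k by exact: (lt_le_trans ltr01 k1).
exists (L / (4 * k ^+ 2)); first by rewrite divr_gt0 // mulr_gt0 // exprn_gt0.
move=> u hu.
apply: contrapT => H.
pose Bad (j : nat) := (fun y => y + j%:R * u) @^-1` (ball (x0 + j%:R * u) r `\` A).
have mBad j : measurable (Bad j).
  have := (measurable_funD (@measurable_id _ _ setT) (measurable_cst (j%:R * u)))
    measurableT (ball (x0 + j%:R * u) r `\` A).
  by rewrite setTI; apply; apply: measurableD => //; exact: measurable_ball.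
have cov : ball x0 r `<=` \big[setU/set0]_(j < m.+1) Bad j.
  move=> y By; apply: contrapT => Hy; apply: H; exists y => j jm.
  apply: contrapT => nA; apply: Hy; rewrite -bigcup_mkord; exists j => //.
  split => //; apply/ballE; move/ballE : By.
  by rewrite (_ : x0 + j%:R * u - (y + j%:R * u) = x0 - y) //; ring.
have bBad j : (mu (Bad j) <= (`|j%:R * u| *+ 2 + e * L)%:E)%E.
  set t := j%:R * u.
  have mS : measurable (ball (x0 + t) r `\` A) by apply: measurableD => //; exact: measurable_ball.
  have := lebesgue_shift t mS; rewrite /pushforward => ->.
  have sub1 : ball (x0 + t) r `<=` ball x0 (r + `|t|).
    move=> z /ballE hz; apply/ballE.
    rewrite (_ : x0 - z = (x0 + t - z) - t); last by ring.
    apply: (le_lt_trans (ler_normB _ _)); by rewrite ltrD2r.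
  have mB1 : measurable (ball x0 (r + `|t|)) by exact: measurable_ball.
  have mB0 : measurable (ball x0 r) by exact: measurable_ball.
  apply: (@le_trans _ _ (mu ((ball x0 (r + `|t|) `\` ball x0 r) `|` (ball x0 r `\` A)))).
    apply: le_measure; rewrite ?inE.
    - exact: mS.
    - by apply: measurableU; apply: measurableD.
    - move=> z [/sub1 hz nA]; have [zb|zb] := pselect (ball x0 r z).
      + by right.
      + by left.
  apply: (le_trans (measureU2 _ _ _)); first by apply: measurableD.
    by apply: measurableD.
  rewrite EFinD; apply: leeD; last exact: (ltW Hr).
  rewrite measureD //=; last by rewrite lebesgue_measure_ball ?ltry // addr_ge0 // ltW.
  rewrite setIidr; last by apply: le_ball; rewrite lerDl.
  have hr1 : 0 <= r + `|t| by rewrite addr_ge0 // ltW.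
  rewrite (lebesgue_measure_ball _ (ltW r0)) (lebesgue_measure_ball _ hr1).
  by rewrite -EFinB lee_fin mulrnDl addrAC subrr add0r.
have h1 : (mu (ball x0 r) <= \sum_(j < m.+1) mu (Bad j))%E.
  apply: (@le_trans _ _ (mu (\big[setU/set0]_(j < m.+1) Bad j))).
    have mU : measurable (\big[setU/set0]_(j < m.+1) Bad j).
      by apply: bigsetU_measurable => i _; exact: mBad.
    exact: (le_measure mu (mem_set (measurable_ball x0 r)) (mem_set mU) cov).
  by apply: le_mu_bigsetU => i _; exact: mBad.
have h2 : (\sum_(j < m.+1) mu (Bad j) <=
    (\sum_(j < m.+1) (`|j%:R * u| *+ 2 + e * L))%:E)%E.
  rewrite -sumEFin; apply: lee_sum => j _; exact: bBad.
move: (le_trans h1 h2); rewrite (lebesgue_measure_ball _ (ltW r0)) lee_fin => h3.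
have h4 : \sum_(j < m.+1) (`|j%:R * u| *+ 2 + e * L) <=
    \sum_(j < m.+1) ((m%:R * `|u|) *+ 2 + e * L).
  apply: ler_sum => j _; rewrite lerD2r lerMn2r /= normrM normr_nat.
  by rewrite ler_wpM2r // ler_nat -ltnS ltn_ord.
rewrite sumr_const card_ord in h4.
have hd : `|u| * (4 * k ^+ 2) < L by rewrite -ltr_pdivlMr // mulr_gt0 // exprn_gt0.
have heK : e * k = 2^-1.
  by rewrite /e invfM mulrAC mulVf ?mul1r // gt_eqF.
have kM : k = m%:R + 1 by rewrite /k -natr1.
have h5 : (m%:R * `|u| *+ 2 + e * L) * k = 2 * (m%:R * k * `|u|) + L / 2.
  rewrite mulrDl (mulrAC e L k) heK mulr2n; ring.
have h6 : 4 * (m%:R * k * `|u|) <= `|u| * (4 * k ^+ 2).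
  have mk : 0 <= k - m%:R by rewrite kM addrAC subrr add0r.
  have := mulr_ge0 (mulr_ge0 mk (ltW k0)) (normr_ge0 u).
  rewrite expr2 => h; rewrite -subr_ge0.
  by rewrite (_ : _ - _ = 4 * ((k - m%:R) * k * `|u|)); [rewrite mulr_ge0 | ring].
have h7 := le_trans h3 h4.
have e9 : forall x : R, x *+ m.+1 = x * k by move=> x; rewrite mulr_natr.
rewrite -/L e9 h5 in h7.
have hL : L = L / 2 + L / 2 by rewrite -splitr.
move: hd h6 h7 hL; clearbody L; clear -L0; move=> hd h6 h7 hL; lra.
Qed.




End Meas.

Section Alg.
Context {R : realType}.

Lemma L_exp (f : {additive R -> R}) (n : nat) (y u : R) (j : nat) :
  f ((y + j%:R * u) ^+ n) - f (y + j%:R * u) ^+ n =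
  \sum_(i < n.+1) ('C(n, i)%:R * (f (y ^+ (n - i) * u ^+ i) - f y ^+ (n - i) * f u ^+ i)) * j%:R ^+ i.
Proof.
rewrite raddfD mulr_natl raddfMn !exprDn raddf_sum -sumrB; apply: eq_bigr => i _.
rewrite !exprMn_n !mulrnAr !raddfMn expr1n mulr1 mulr_natl -!mulrnDl mulrnAC.
by [].
Qed.

Lemma coef_bound (n : nat) : exists K : 'I_n.+1 -> R, forall (b : 'I_n.+1 -> R) (M : R),
  (forall j : 'I_n.+1, `|\sum_(i < n.+1) b i * (j : nat)%:R ^+ i| <= M) ->
  forall i, `|b i| <= K i * M.
Proof.
pose a : 'rV[R]_n.+1 := \row_(j < n.+1) (j : nat)%:R.
pose V := Vandermonde n.+1 a.
have uV : V \in unitmx.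
  rewrite unitmxE unitfE det_Vandermonde; apply/prodf_neq0 => i _.
  apply/prodf_neq0 => j ij.
  by rewrite !mxE subr_eq0 eqr_nat gtn_eqF.
pose W := invmx V.
exists (fun i => \sum_(j < n.+1) `|W j i|).
move=> b M hb i.
pose B : 'rV[R]_n.+1 := \row_i b i.
have hv : forall j : 'I_n.+1, (B *m V) 0 j = \sum_(i < n.+1) b i * (j : nat)%:R ^+ i.
  move=> j; rewrite !mxE; apply: eq_bigr => k _.
  by rewrite /V /Vandermonde !mxE.
have hB : B = (B *m V) *m W by rewrite mulmxK.
have -> : b i = ((B *m V) *m W) 0 i by rewrite -hB mxE.
rewrite mxE (le_trans (ler_norm_sum _ _ _)) // mulr_suml; apply: ler_sum => j _.
by rewrite normrM hv mulrC ler_wpM2l.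
Qed.
Lemma zero_of_bound (a B : R) : (forall N : nat, N%:R * `|a| <= B) -> a = 0.
Proof.
move=> h; apply/eqP; apply: contraT => a0.
have na : 0 < `|a| by rewrite normr_gt0.
have B0 : 0 <= B by have := h 0%N; rewrite mul0r.
have := archi_boundP (divr_ge0 B0 (ltW na)).
set N := Num.Def.archi_bound _ => hN.
have := h N; rewrite -ler_pdivlMr //.
by rewrite leNgt hN.
Qed.

Lemma gz (g : {additive R -> R}) (k : int) (x : R) : g (k%:~R * x) = k%:~R * g x.
Proof. by rewrite !mulrzl raddfMz. Qed.

Lemma floor_split (z : R) : exists k : int, exists2 w : R, z = k%:~R + w & 0 <= w < 1.
Proof.
exists (Num.floor z), (z - (Num.floor z)%:~R); first by rewrite addrC subrK.
have /andP[h1 h2] := floor_itv z.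
rewrite subr_ge0 h1 /= ltrBlDl; move: h2; rewrite intrD addrC => h2; exact: h2.
Qed.

Lemma bounded_linear (f : {additive R -> R}) M :
  (forall x, `|x| < 1 -> `|f x| <= M) -> forall x, f x = f 1 * x.
Proof.
move=> hM x; apply/eqP; rewrite -subr_eq0; apply/eqP.
apply: (@zero_of_bound _ (M + `|f 1|)) => N.
have [k [w zE /andP[w0 w1]]] := floor_split (x *+ N).
have hw : `|w| < 1 by rewrite ger0_norm.
have e : N%:R * (f x - f 1 * x) = f w - f 1 * w.
  have := congr1 f zE; rewrite raddfMn raddfD -[k%:~R]mulr1 gz => e1.
  rewrite mulrBr !mulr_natl -mulrnAr e1 zE; ring.
rewrite -[N%:R]ger0_norm // -normrM e.
apply: (le_trans (ler_normB _ _)); rewrite lerD ?hM // normrM.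
by rewrite ler_piMr // ltW.
Qed.

Lemma square_lin (g : {additive R -> R}) M : g 1 = 1 ->
  (forall x, `|x| < 1 -> `|g (x ^+ 2) - g x ^+ 2| <= M) -> forall x, g x = x.
Proof.
move=> g1 hM.
have gk : forall k : int, g k%:~R = k%:~R by move=> k; rewrite -[k%:~R]mulr1 gz g1.
have psiT : forall (k : int) w,
    g ((k%:~R + w) ^+ 2) - g (k%:~R + w) ^+ 2 = g (w ^+ 2) - g w ^+ 2.
  move=> k w.
  have -> : (k%:~R + w) ^+ 2 = k%:~R * (k%:~R + w *+ 2) + w ^+ 2 :> R by ring.
  rewrite raddfD gz raddfD gk raddfMn raddfD gk; ring.
have psiN : forall x (N : nat),
    g ((x *+ N) ^+ 2) - g (x *+ N) ^+ 2 = (g (x ^+ 2) - g x ^+ 2) *+ (N ^ 2).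
  by move=> x N; rewrite exprMn_n raddfMn raddfMn exprMn_n mulrnBl.
have psi0 : forall x, g (x ^+ 2) = g x ^+ 2.
  move=> x; apply/eqP; rewrite -subr_eq0; apply/eqP; apply: (@zero_of_bound _ M) => N.
  have [k [w zE /andP[w0 w1]]] := floor_split (x *+ N).
  have hw : `|w| < 1 by rewrite ger0_norm.
  have := hM w hw; rewrite -(psiT k) -zE psiN; apply: le_trans.
  rewrite -[_ *+ (N ^ 2)]mulr_natl normrM normr_nat ler_wpM2r // ler_nat.
  by case: (N) => // n'; rewrite expnS expn1 leq_pmulr.
have mono : forall t, 0 <= t -> 0 <= g t.
  by move=> t t0; rewrite -(sqr_sqrtr t0) psi0; exact: sqr_ge0.
move=> x; apply/eqP; rewrite -subr_eq0; apply/eqP; apply: (@zero_of_bound _ 1) => N.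
have [k [w zE /andP[w0 w1]]] := floor_split (x *+ N).
have e : N%:R * (g x - x) = g w - w.
  rewrite mulrBr !mulr_natl -raddfMn zE raddfD gk; ring.
rewrite -[N%:R]ger0_norm // -normrM e.
have h1 := mono _ w0.
have h2 : g w <= 1.
  have h := mono (1 - w) (ltac:(by rewrite subr_ge0 ltW)).
  by move: h; rewrite raddfB g1 subr_ge0.
rewrite ler_norml; apply/andP; split; lra.
Qed.
End Alg.

Lemma addF {R : realType} (f : R -> R) : additive_fun f -> {F : {additive R -> R} | F =1 f}.
Proof.
move=> af.
have f0 : f 0 = 0.
  by have := af 0 0; rewrite addr0 => /eqP; rewrite addrC -subr_eq subrr eq_sym => /eqP.
have sa : nmod_morphism f by split => // x y; exact: af.
by exists (HB.pack_for {additive R -> R} f (GRing.isNmodMorphism.Build _ _ f sa)).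
Qed.

Theorem mainTheorem6 (R : realType) (n : nat) (f : R -> R) :
  (0 < n)%N -> n <> 1%N ->
  additive_fun f ->
  locally_regular (fun x : R => f (x ^+ n) - f x ^+ n) ->
  forall x : R, f x = f 1 * x.
Proof.
move=> n0 n1 af lr.
have [F Ff] := addF af.
have fF : f = F by apply/funext => x; rewrite Ff.
subst f.
have [A [mA A0 [M hM]]] := L1 lr.
have [d d0 hd] := steinhaus n mA A0.
have [K hK] := @coef_bound R n.
pose phi x := F (x ^+ n) - F x ^+ n.
have B1 : forall u, `|u| < d -> `|phi u| <= K ord_max * M.
  move=> u hu; have [y hy] := hd u hu.
  have := hK (fun i : 'I_n.+1 => 'C(n, i)%:R *
     (F (y ^+ (n - i) * u ^+ i) - F y ^+ (n - i) * F u ^+ i)) M.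
  move=> /(_ _ ord_max) /=; rewrite subnn !expr0 !mul1r binn mul1r.
  apply => j.
  rewrite (_ : \sum_(i < n.+1) _ = phi (y + j%:R * u)); last by rewrite /phi L_exp.
  by apply: hM; apply: hy; rewrite -ltnS ltn_ord.
have phiN : forall x (N : nat), phi (x *+ N) = phi x *+ (N ^ n).
  by move=> x N; rewrite /phi exprMn_n raddfMn raddfMn exprMn_n mulrnBl.
have [M2 hM2] : exists M2, forall z, `|z| < n.+1%:R -> `|phi z| <= M2.
  pose N := (Num.Def.archi_bound (n.+1%:R / d)).+1.
  have N0 : (0 < N)%N by [].
  have hN : n.+1%:R / d < N%:R.
    apply: (lt_le_trans (archi_boundP _)); first by rewrite divr_ge0 // ltW.
    by rewrite ler_nat.
  exists ((K ord_max * M) *+ (N ^ n)) => z hz.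
  have zE : z = (z / N%:R) *+ N by rewrite -mulr_natr mulfVK // pnatr_eq0 -lt0n.
  rewrite zE phiN normrMn lerMn2r; apply/orP; right; apply: B1.
  rewrite normrM normfV normr_nat ltr_pdivrMr ?ltr0n //.
  apply: (lt_trans hz); rewrite mulrC -ltr_pdivrMr //.
have B3 : forall x, `|x| < 1 -> forall i : 'I_n.+1,
    `|'C(n, i)%:R * (F (x ^+ (n - i) * 1 ^+ i) - F x ^+ (n - i) * F 1 ^+ i)| <= K i * M2.
  move=> x hx; apply: hK => j.
  rewrite (_ : \sum_(i < n.+1) _ = phi (x + j%:R * 1)); last by rewrite /phi L_exp.
  apply: hM2; rewrite mulr1; apply: (le_lt_trans (ler_normD _ _)).
  rewrite normr_nat.
  have -> : n.+1%:R = 1 + n%:R :> R by rewrite -natr1 addrC.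
  by apply: ltr_leD => //; rewrite ler_nat -ltnS ltn_ord.
have : exists m, n = m.+2 by move: n0 n1; case: (n) => [|[|m]] // _ _; exists m.
move=> [m nE]; subst n.
set c := F 1.
have Bx1 : forall x, `|x| < 1 ->
    `|'C(m.+2, m.+1)%:R * (F x - F x * c ^+ m.+1)| <= K (inord m.+1) * M2.
  by move=> x hx; have := B3 x hx (inord m.+1); rewrite inordK // subSnn !expr1 expr1n mulr1.
have Bx2 : forall x, `|x| < 1 ->
    `|'C(m.+2, m)%:R * (F (x ^+ 2) - F x ^+ 2 * c ^+ m)| <= K (inord m) * M2.
  move=> x hx; have := B3 x hx (inord m).
  rewrite inordK; last exact: leqW (leqW (leqnn m.+1)).
  by rewrite (_ : (m.+2 - m)%N = 2%N) ?expr1n ?mulr1 // -addn2 addKn.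
have C1 : 0 < 'C(m.+2, m.+1)%:R :> R by rewrite ltr0n bin_gt0.
have C2 : 0 < 'C(m.+2, m)%:R :> R.
  by rewrite ltr0n bin_gt0; exact: leqW (leqW (leqnn m)).
have [c1|c1] := eqVneq (c ^+ m.+1) 1; last first.
  rewrite /c; apply: (bounded_linear (M := K (inord m.+1) * M2 / ('C(m.+2, m.+1)%:R * `|1 - c ^+ m.+1|))).
  move=> x hx; have := Bx1 x hx.
  rewrite (_ : F x - F x * c ^+ m.+1 = (1 - c ^+ m.+1) * F x); last by ring.
  have cp : 0 < `|1 - c ^+ m.+1| by rewrite normr_gt0 subr_eq0 eq_sym.
  rewrite !normrM normr_nat mulrA => h.
  by rewrite ler_pdivlMr ?mulr_gt0 // mulrC.
have nc : `|c| = 1.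
  have : `|c| ^+ m.+1 == 1 by rewrite -normrX c1 normr1.
  by rewrite pexpr_eq1 // => /eqP.
have cc : c * c = 1 by rewrite -expr2 -real_normK ?num_real // nc expr1n.
have cm : c ^+ m = c by rewrite -[LHS]mulr1 -cc mulrA -exprSr c1 mul1r.
have af2 : additive_fun (fun x => c * F x) by move=> x y; rewrite raddfD mulrDr.
have [G Gf] := addF af2.
have G1 : G 1 = 1 by rewrite Gf.
have hG := square_lin (M := K (inord m) * M2 / 'C(m.+2, m)%:R) G1.
have hG' : forall x, G x = x.
  apply: hG => x hx; rewrite !Gf.
  have e1 : (c * F x) ^+ 2 = F x ^+ 2 * (c * c) by ring.
  have e2 : c * (F (x ^+ 2) - F x ^+ 2 * c) = c * F (x ^+ 2) - F x ^+ 2 * (c * c) by ring.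
  have e3 : c * F (x ^+ 2) - (c * F x) ^+ 2 = c * (F (x ^+ 2) - F x ^+ 2 * c ^+ m).
    by rewrite cm e2 e1.
  rewrite e3 normrM nc mul1r.
  have := Bx2 x hx; rewrite normrM normr_nat => h.
  by rewrite ler_pdivlMr // mulrC.
move=> x; have := hG' x; rewrite Gf => e.
by rewrite -[F x]mul1r -cc -mulrA e.
Qed.
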